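(* Let $A=\{\mathbf{a}_1,\dots,\mathbf{a}_m\}\subset\mathbb{Z}^n$ be such that $\mathbb{N}A$ is an affine semigroup, and let $E_1,E_2$ be nonempty disjoint subsets of $\{1,\dots,m\}$ with $E_1\cup E_2=\{1,\dots,m\}$. If $\mathbb{N}A$ is the gluing of $\mathbb{N}A^{E_1}$ and $\mathbb{N}A^{E_2}$, then $\sigma=\mathrm{pos}_{\mathbb{Q}}(A)$ is the direct sum $\sigma_{E_1}\oplus\sigma_{E_2}$, i.e. there is $\mathbf{a}\in\sigma_{E_1}\cap\sigma_{E_2}$ with $\mathrm{span}_{\mathbb{Q}}(\sigma_{E_1})\cap\mathrm{span}_{\mathbb{Q}}(\sigma_{E_2})=\mathbb{Q}\mathbf{a}$, and $\sigma=\mathrm{pos}_{\mathbb{Q}}(\sigma_{E_1}\cup\sigma_{E_2})$.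
   Context: $\mathbb{N}A=\{\sum n_i\mathbf{a}_i: n_i\in\mathbb{N}\}$. An affine semigroup is a finitely generated subsemigroup $S$ of $\mathbb{Z}^n$ with $S\cap(-S)=\{\mathbf 0\}$. For $E\subset\{1,\dots,m\}$, $A^E=\{\mathbf{a}_i:i\in E\}$ and $\sigma_E=\mathrm{pos}_{\mathbb{Q}}(A^E)$ (nonnegative rational combinations). $\mathbb{N}A$ is the gluing of $\mathbb{N}A^{E_1}$ and $\mathbb{N}A^{E_2}$ if there is a nonzero $\mathbf{a}\in\mathbb{N}A^{E_1}\cap\mathbb{N}A^{E_2}$ with $\mathbb{Z}\mathbf{a}=\mathbb{Z}A^{E_1}\cap\mathbb{Z}A^{E_2}$. *)

(* Defs.v *)
From HB Require Import structures.
From mathcomp Require Import all_boot all_order all_algebra.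
Set Implicit Arguments. Unset Strict Implicit. Unset Printing Implicit Defensive.
Import Order.TTheory GRing.Theory Num.Theory.
Local Open Scope ring_scope.

Definition toQ n (v : 'rV[int]_n) : 'rV[rat]_n := map_mx (fun z : int => z%:~R) v.

Definition NA n m (A : 'I_m -> 'rV[int]_n) (E : {set 'I_m}) (v : 'rV[int]_n) : Prop :=
  exists c : 'I_m -> nat, v = \sum_(i in E) (c i)%:R *: A i.

Definition ZA n m (A : 'I_m -> 'rV[int]_n) (E : {set 'I_m}) (v : 'rV[int]_n) : Prop :=
  exists c : 'I_m -> int, v = \sum_(i in E) c i *: A i.

(* N A is an affine semigroup (finitely generated by construction):
   S ∩ (-S) = {0} *)
Definition affine_semigroup n m (A : 'I_m -> 'rV[int]_n) : Prop :=
  forall v, NA A setT v -> NA A setT (- v) -> v = 0.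

Definition posQ n (P : 'rV[rat]_n -> Prop) (v : 'rV[rat]_n) : Prop :=
  exists (k : nat) (x : 'I_k -> 'rV[rat]_n) (c : 'I_k -> rat),
    (forall j, P (x j)) /\ (forall j, 0 <= c j) /\ v = \sum_(j < k) c j *: x j.

Definition spanQ n (P : 'rV[rat]_n -> Prop) (v : 'rV[rat]_n) : Prop :=
  exists (k : nat) (x : 'I_k -> 'rV[rat]_n) (c : 'I_k -> rat),
    (forall j, P (x j)) /\ v = \sum_(j < k) c j *: x j.

Definition gens n m (A : 'I_m -> 'rV[int]_n) (E : {set 'I_m}) (v : 'rV[rat]_n) : Prop :=
  exists2 i, i \in E & v = toQ (A i).

Definition sigma n m (A : 'I_m -> 'rV[int]_n) (E : {set 'I_m}) : 'rV[rat]_n -> Prop :=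
  posQ (gens A E).

Definition gluing n m (A : 'I_m -> 'rV[int]_n) (E1 E2 : {set 'I_m}) : Prop :=
  exists a : 'rV[int]_n,
    a != 0 /\ NA A E1 a /\ NA A E2 a /\
    (forall v, (ZA A E1 v /\ ZA A E2 v) <-> exists z : int, v = z *: a).

(* Main.v *)
Require Import Defs.
From HB Require Import structures.
From mathcomp Require Import all_boot all_order all_algebra.
Import Order.TTheory GRing.Theory Num.Theory.
Local Open Scope ring_scope.

Set Implicit Arguments.
Section Aux.
Variables (n m : nat) (A : 'I_m -> 'rV[int]_n).

Lemma toQ_sum I (r : seq I) (P : pred I) (F : I -> 'rV[int]_n) :
  toQ (\sum_(i <- r | P i) F i) = \sum_(i <- r | P i) toQ (F i).
Proof. by rewrite /toQ map_mx_sum. Qed.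

Lemma toQZ (z : int) (v : 'rV[int]_n) : toQ (z *: v) = z%:~R *: toQ v.
Proof. by apply/matrixP => i j; rewrite !mxE /= rmorphM. Qed.

Lemma toQ_inj (v w : 'rV[int]_n) : toQ v = toQ w -> v = w.
Proof.
move=> /matrixP H; apply/matrixP => i j; have := H i j; rewrite !mxE.
exact: intr_inj.
Qed.

Definition LC (E : {set 'I_m}) (v : 'rV[rat]_n) :=
  exists q : 'I_m -> rat, v = \sum_(i in E) q i *: toQ (A i).
Definition PC (E : {set 'I_m}) (v : 'rV[rat]_n) :=
  exists q : 'I_m -> rat, (forall i, 0 <= q i) /\ v = \sum_(i in E) q i *: toQ (A i).

Lemma cone_ind (P Q : 'rV[rat]_n -> Prop) :
  P 0 -> (forall x y, P x -> P y -> P (x + y)) ->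
  (forall c x, 0 <= c -> P x -> P (c *: x)) -> (forall x, Q x -> P x) ->
  forall v, posQ Q v -> P v.
Proof.
move=> P0 PD PZ QP v [k [x [c [Hx [Hc ->]]]]].
apply: big_ind => // j _; apply: PZ => //; exact: QP.
Qed.

Lemma span_ind (P Q : 'rV[rat]_n -> Prop) :
  P 0 -> (forall x y, P x -> P y -> P (x + y)) ->
  (forall c x, P x -> P (c *: x)) -> (forall x, Q x -> P x) ->
  forall v, spanQ Q v -> P v.
Proof.
move=> P0 PD PZ QP v [k [x [c [Hx ->]]]].
apply: big_ind => // j _; apply: PZ => //; exact: QP.
Qed.

Lemma sum0 (E : {set 'I_m}) : \sum_(i in E) 0 *: toQ (A i) = 0.
Proof. by apply: big1 => i _; rewrite scale0r. Qed.

Lemma sumD (E : {set 'I_m}) q1 q2 :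
  \sum_(i in E) q1 i *: toQ (A i) + \sum_(i in E) q2 i *: toQ (A i) =
  \sum_(i in E) (q1 i + q2 i) *: toQ (A i).
Proof. by rewrite -big_split; apply: eq_bigr => i _; rewrite scalerDl. Qed.

Lemma sumZ (E : {set 'I_m}) c q :
  c *: \sum_(i in E) q i *: toQ (A i) = \sum_(i in E) (c * q i) *: toQ (A i).
Proof. by rewrite scaler_sumr; apply: eq_bigr => i _; rewrite scalerA. Qed.

Lemma gens_PC E x : gens A E x -> PC E x.
Proof.
move=> [i0 Hi0 ->]; exists (fun i => (i == i0)%:R); split.
  by move=> i; case: (i == i0).
rewrite (bigD1 i0) //= eqxx scale1r big1 ?addr0 // => i /andP [_ /negbTE ->].
by rewrite scale0r.
Qed.

Lemma sigma_PC E v : sigma A E v -> PC E v.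
Proof.
apply: cone_ind.
- by exists (fun _ => 0); split => //; rewrite sum0.
- move=> x y [q1 [H1 ->]] [q2 [H2 ->]]; exists (fun i => q1 i + q2 i); split.
    by move=> i; rewrite addr_ge0.
  by rewrite sumD.
- move=> c x Hc [q [H ->]]; exists (fun i => c * q i); split.
    by move=> i; rewrite mulr_ge0.
  by rewrite sumZ.
- exact: gens_PC.
Qed.

Lemma PC_setT E v : PC E v -> PC setT v.
Proof.
move=> [q [Hq ->]]; exists (fun i => if i \in E then q i else 0); split.
  by move=> i; case: (i \in E).
rewrite big_mkcond /= [RHS]big_mkcond /=; apply: eq_bigr => i _.
by rewrite in_setT; case: (i \in E); rewrite ?scale0r.
Qed.

Lemma PC_sigmaT v : PC setT v -> sigma A setT v.
Proof.
move=> [q [Hq ->]]; exists m, (fun i => toQ (A i)), q; split; last split => //.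
  by move=> j; exists j; rewrite ?in_setT.
by apply: eq_bigl => i; rewrite in_setT.
Qed.

Lemma sigma_span E v : spanQ (sigma A E) v -> LC E v.
Proof.
apply: span_ind.
- by exists (fun _ => 0); rewrite sum0.
- by move=> x y [q1 ->] [q2 ->]; exists (fun i => q1 i + q2 i); rewrite sumD.
- by move=> c x [q ->]; exists (fun i => c * q i); rewrite sumZ.
- by move=> x /sigma_PC [q [_ ->]]; exists q.
Qed.

Lemma clear_den (q : 'I_m -> rat) :
  exists2 D : int, D != 0 & exists z : 'I_m -> int,
    forall i, D%:~R * q i = (z i)%:~R.
Proof.
exists (\prod_(i < m) denq (q i)).
  by apply/prodf_neq0 => i _; rewrite denq_neq0.
exists (fun i => (\prod_(j < m | j != i) denq (q j)) * numq (q i)) => i.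
rewrite (bigD1 i) //= !rmorphM /= numqE.
by rewrite [(denq _)%:~R * _]mulrC -mulrA [_ * q i]mulrC.
Qed.

Lemma LC_ZA E v : LC E v ->
  exists2 D : int, D != 0 & exists2 w, ZA A E w & toQ w = D%:~R *: v.
Proof.
move=> [q ->]; have [D HD [z Hz]] := clear_den q.
exists D => //; exists (\sum_(i in E) z i *: A i); first by exists z.
rewrite sumZ toQ_sum; apply: eq_bigr => i _.
by rewrite toQZ Hz.
Qed.

Lemma ZA_scale E w (d : int) : ZA A E w -> ZA A E (d *: w).
Proof.
move=> [c ->]; exists (fun i => d * c i); rewrite scaler_sumr.
by apply: eq_bigr => i _; rewrite scalerA.
Qed.

Lemma NA_sigma E a : E != set0 -> NA A E a -> sigma A E (toQ a).
Proof.
case/set0Pn => i0 Hi0 [c ->].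
exists m, (fun j => toQ (A (if j \in E then j else i0))),
  (fun j => if j \in E then (c j)%:R else 0).
split; first by move=> j; exists (if j \in E then j else i0) => //; case: ifP.
split; first by move=> j; case: ifP => // _; rewrite ler0n.
rewrite toQ_sum big_mkcond /=; apply: eq_bigr => i _.
case: ifP => _; last by rewrite scale0r.
by rewrite toQZ -[(c i)%:R]intz natz rmorph_nat.
Qed.

End Aux.
Unset Implicit Arguments.

Theorem proposition3p1 (n m : nat) (A : 'I_m -> 'rV[int]_n)
    (E1 E2 : {set 'I_m}) :
  affine_semigroup A ->
  E1 != set0 -> E2 != set0 -> [disjoint E1 & E2] -> E1 :|: E2 = setT ->
  gluing A E1 E2 ->
  (exists a : 'rV[rat]_n,
      sigma A E1 a /\ sigma A E2 a /\
      (forall v, (spanQ (sigma A E1) v /\ spanQ (sigma A E2) v) <->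
                 exists q : rat, v = q *: a)) /\
  (forall v, sigma A setT v <->
             posQ (fun w => sigma A E1 w \/ sigma A E2 w) v).
Proof.
move=> _ H1 H2 _ HU [a [a0 [Na1 [Na2 Hg]]]].
have S1 := NA_sigma H1 Na1; have S2 := NA_sigma H2 Na2.
split.
  exists (toQ a); split => //; split => // v; split.
    move=> [/sigma_span/LC_ZA [D1 HD1 [w1 Z1 T1]] /sigma_span/LC_ZA [D2 HD2 [w2 Z2 T2]]].
    have Ew : D2 *: w1 = D1 *: w2.
      apply: toQ_inj; rewrite !toQZ T1 T2 !scalerA.
      by rewrite -!rmorphM /= mulrC.
    have [z Hz] : exists z : int, D2 *: w1 = z *: a.
      apply/Hg; split; first exact: ZA_scale.
      rewrite Ew; exact: ZA_scale.
    exists (z%:~R / (D2 * D1)%:~R).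
    have HD : (D2 * D1)%:~R != 0 :> rat by rewrite intr_eq0 mulf_neq0.
    apply: (scalerI HD); rewrite scalerA mulrCA mulfV // mulr1.
    by rewrite -toQZ -Hz toQZ T1 scalerA -rmorphM.
  move=> [q ->]; split; exists 1%N, (fun _ => toQ a), (fun _ => q);
    (split; [by [] | rewrite big_ord1]) => //.
move=> v; split.
  move=> [k [x [c [Hx [Hc ->]]]]]; exists k, x, c; split => // j.
  have [i Hi ->] := Hx j.
  have : i \in E1 :|: E2 by rewrite HU in_setT.
  case/setUP => Hi'; [left | right];
    exists 1%N, (fun _ => toQ (A i)), (fun _ => 1); rewrite big_ord1 scale1r;
    by split; [move=> _; exists i | split].
move=> Hv; apply: PC_sigmaT; move: v Hv; apply: cone_ind.
- by exists (fun _ => 0); split => //; rewrite sum0.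
- move=> x y [q1 [Hq1 ->]] [q2 [Hq2 ->]]; exists (fun i => q1 i + q2 i); split.
    by move=> i; rewrite addr_ge0.
  by rewrite sumD.
- move=> c x Hc [q [H ->]]; exists (fun i => c * q i); split.
    by move=> i; rewrite mulr_ge0.
  by rewrite sumZ.
- by move=> x [] /sigma_PC /PC_setT.
Qed.
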